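(* Let $m_{-1}<m_1$ and $n_1<n_{-1}$ be real. For $(a,b)\in[0,\infty)^2$ let $F_+(a,b)=\frac{a}{a+b}m_1+\frac{b}{a+b}m_{-1}-a$ and $F_-(a,b)=\frac{b}{a+b}n_{-1}+\frac{a}{a+b}n_1-b$ (with the convention $0/0=1/2$). There is a unique $(a,b)\in[0,\infty)^2$ such that $a$ is a global maximizer of $a'\mapsto F_+(a',b)$ over $[0,\infty)$ and $b$ is a global maximizer of $b'\mapsto F_-(a,b')$ over $[0,\infty)$. It is $(a,b)=\Big(\frac{M^2N}{(M+N)^2},\frac{MN^2}{(M+N)^2}\Big)$ with $M=m_1-m_{-1}$, $N=n_{-1}-n_1$; in particular $a,b>0$. *)

(* Defs.v *)
From mathcomp Require Import all_boot all_order all_algebra.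
Set Implicit Arguments. Unset Strict Implicit. Unset Printing Implicit Defensive.
Import Order.TTheory GRing.Theory Num.Theory.
Local Open Scope ring_scope.

Definition frac (R : realFieldType) (x s : R) : R :=
  if s == 0 then 2^-1 else x / s.

Definition Fplus (R : realFieldType) (m1 mm1 a b : R) : R :=
  frac a (a + b) * m1 + frac b (a + b) * mm1 - a.

Definition Fminus (R : realFieldType) (n1 nm1 a b : R) : R :=
  frac b (a + b) * nm1 + frac a (a + b) * n1 - b.

Definition is_equilibrium (R : realFieldType) (m1 mm1 n1 nm1 a b : R) : Prop :=
  [/\ 0 <= a, 0 <= b,
      (forall a' : R, 0 <= a' -> Fplus m1 mm1 a' b <= Fplus m1 mm1 a b) &
      (forall b' : R, 0 <= b' -> Fminus n1 nm1 a b' <= Fminus n1 nm1 a b)].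

(* Main.v *)
Require Import Defs.
From mathcomp Require Import all_boot all_order all_algebra.
From mathcomp Require Import ring lra.
Import Order.TTheory GRing.Theory Num.Theory.
Local Open Scope ring_scope.

Lemma Fplus_pos (R : realFieldType) (m1 mm1 a b : R) : a + b != 0 ->
  Fplus m1 mm1 a b = (a * m1 + b * mm1) / (a + b) - a.
Proof. move=> h; rewrite /Fplus /Defs.frac (negbTE h); field; exact: h. Qed.

Lemma Fplus_diff (R : realFieldType) (m1 mm1 a a' b : R) :
  0 <= a -> 0 <= a' -> 0 < b ->
  Fplus m1 mm1 a' b - Fplus m1 mm1 a b =
  (a' - a) * ((m1 - mm1) * b - (a' + b) * (a + b)) / ((a' + b) * (a + b)).
Proof.
move=> ha ha' hb.
have h1 : a + b != 0 by rewrite gt_eqF //; lra.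
have h2 : a' + b != 0 by rewrite gt_eqF //; lra.
rewrite !Fplus_pos //; field; by rewrite ?h1 ?h2.
Qed.

Lemma Fplus_le (R : realFieldType) (m1 mm1 a a' b : R) :
  0 <= a -> 0 <= a' -> 0 < b ->
  (Fplus m1 mm1 a' b <= Fplus m1 mm1 a b) <->
  ((a' - a) * ((m1 - mm1) * b - (a' + b) * (a + b)) <= 0).
Proof.
move=> ha ha' hb.
have hd : 0 < (a' + b) * (a + b) by apply: mulr_gt0; lra.
have := @Fplus_diff R m1 mm1 a a' b ha ha' hb.
set X := (a' - a) * _ => E.
have E2 : X = (Fplus m1 mm1 a' b - Fplus m1 mm1 a b) * ((a' + b) * (a + b)).
  by rewrite E mulfVK // gt_eqF.
rewrite E2; split => H.
  by rewrite pmulr_lle0 // subr_le0.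
by rewrite -subr_le0; move: H; rewrite pmulr_lle0.
Qed.

Lemma br (R : realFieldType) (m1 mm1 a b : R) :
  mm1 < m1 -> 0 < a -> 0 < b ->
  (forall a', 0 <= a' -> Fplus m1 mm1 a' b <= Fplus m1 mm1 a b) <->
  (m1 - mm1) * b = (a + b) ^+ 2.
Proof.
move=> hm ha0 hb; have ha : 0 <= a by exact: ltW. set M := m1 - mm1.
have hM : 0 < M by rewrite /M subr_gt0.
split=> [H|E a' ha']; last first.
  apply/(@Fplus_le R m1 mm1 a a' b ha ha' hb); rewrite -/M E.
  have -> : (a'-a)*((a+b)^+2 - (a'+b)*(a+b)) = - ((a'-a)^+2*(a+b)) by ring.
  rewrite oppr_le0; apply: mulr_ge0; [exact: sqr_ge0| lra].
have K a' : 0 <= a' -> (a' - a) * (M * b - (a' + b) * (a + b)) <= 0.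
  by move=> h; apply/(@Fplus_le R m1 mm1 a a' b ha h hb)/H.
set s := a + b.
have hs : 0 < s by rewrite /s; lra.
pose c := (s ^+ 2 + M * b) / (2 * s) - b.
have hc : (c + b) * s = (s ^+ 2 + M * b) / 2.
  rewrite /c addrNK; field; rewrite gt_eqF //.
have hca : (c - a) * (2 * s) = M * b - s ^+ 2.
  rewrite mulrBl /c mulrBl divfK ?mulf_neq0 ?gt_eqF //; rewrite /s; ring.
case: (ltgtP (M * b) (s ^+ 2)) => // hlt.
- case: (lerP 0 c) => hc0.
    have := K c hc0; rewrite -/s hc; nra.
  have := K 0 (lexx _); rewrite -/s add0r.
  have : M * b < b * s.
    have : (c + b) * s < b * s by rewrite ltr_pM2r //; lra.
    rewrite hc; move: hb ha; rewrite /s; nra.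
  nra.
- have hc0 : 0 <= c by nra.
  have := K c hc0; rewrite -/s hc; nra.
Qed.

Lemma br0 (R : realFieldType) (m1 mm1 a : R) :
  mm1 < m1 -> 0 <= a ->
  ~ (forall a', 0 <= a' -> Fplus m1 mm1 a' 0 <= Fplus m1 mm1 a 0).
Proof.
move=> hm ha H.
have Fp x : 0 < x -> Fplus m1 mm1 x 0 = m1 - x.
  move=> hx; rewrite Fplus_pos addr0 ?gt_eqF //; field; rewrite gt_eqF //.
have [ha0|hne] := eqVneq a 0; last first.
- have hpos : 0 < a by rewrite lt_def hne.
  have h2 : 0 < a / 2 by lra.
  have := H (a / 2) (ltW h2); rewrite (Fp _ h2) (Fp _ hpos); lra.
- subst a; have := H ((m1 - mm1) / 4); rewrite Fp; last lra.
  rewrite /Fplus /Defs.frac addr0 eqxx; lra.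
Qed.

Lemma Fminus_sym (R : realFieldType) (n1 nm1 a b : R) :
  Fminus n1 nm1 a b = Fplus nm1 n1 b a.
Proof. by rewrite /Defs.Fminus /Defs.Fplus [b + a]addrC. Qed.

Theorem mainTheorem13 (R : realFieldType) (m1 mm1 n1 nm1 : R)
  (hm : mm1 < m1) (hn : n1 < nm1) :
  let M := m1 - mm1 in let N := nm1 - n1 in
  (forall a b : R, is_equilibrium m1 mm1 n1 nm1 a b <->
     (a = M ^+ 2 * N / (M + N) ^+ 2 /\ b = M * N ^+ 2 / (M + N) ^+ 2)) /\
  (0 < M ^+ 2 * N / (M + N) ^+ 2 /\ 0 < M * N ^+ 2 / (M + N) ^+ 2).
Proof.
move=> M N.
have hM : 0 < M by rewrite /M subr_gt0.
have hN : 0 < N by rewrite /N subr_gt0.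
have hMN : 0 < M + N by lra.
have hMN0 : M + N != 0 by rewrite gt_eqF.
have pa : 0 < M ^+ 2 * N / (M + N) ^+ 2.
  by rewrite divr_gt0 ?mulr_gt0 ?exprn_gt0.
have pb : 0 < M * N ^+ 2 / (M + N) ^+ 2.
  by rewrite divr_gt0 ?mulr_gt0 ?exprn_gt0.
split => //; move=> a b; split.
- case=> ha hb Hp Hm.
  have Hm' : forall b', 0 <= b' -> Fplus nm1 n1 b' a <= Fplus nm1 n1 b a.
    by move=> b' h; rewrite -!Fminus_sym; exact: Hm.
  have hb0 : 0 < b.
    rewrite lt_def hb andbT; apply/negP => /eqP e; subst b.
    exact: (@br0 R m1 mm1 a hm ha Hp).
  have ha0 : 0 < a.
    rewrite lt_def ha andbT; apply/negP => /eqP e; subst a.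
    exact: (@br0 R nm1 n1 b hn hb Hm').
  have E1 := proj1 (@br R m1 mm1 a b hm ha0 hb0) Hp.
  have E2 := proj1 (@br R nm1 n1 b a hn hb0 ha0) Hm'.
  rewrite -/M in E1; rewrite -/N in E2.
  set s := a + b.
  have hs : s != 0 by rewrite gt_eqF // /s; lra.
  have E2' : N * a = s ^+ 2 by rewrite E2 /s addrC.
  have Es : s * (M + N) = M * N.
    apply: (mulfI hs); rewrite mulrA -expr2.
    have -> : s ^+ 2 * (M + N) = M * s ^+ 2 + N * s ^+ 2 by ring.
    rewrite -{1}E2' -E1 /s; ring.
  have Ea : a * (M + N) = M * s.
    have : N * a = M * b by rewrite E2' E1.
    move=> h; rewrite mulrDr [a * N]mulrC h /s; ring.
  have Eb : b * (M + N) = N * s.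
    have : N * a = M * b by rewrite E2' E1.
    move=> h; rewrite mulrDr [b * M]mulrC -h /s; ring.
  split.
  + apply: (mulIf (expf_neq0 2 hMN0)); rewrite divfK ?expf_neq0 //.
    by rewrite expr2 mulrA Ea -mulrA Es; ring.
  + apply: (mulIf (expf_neq0 2 hMN0)); rewrite divfK ?expf_neq0 //.
    by rewrite expr2 mulrA Eb -mulrA Es; ring.
- case=> -> ->; split; [exact: ltW|exact: ltW| |].
  + apply/(@br R m1 mm1 _ _ hm pa pb); rewrite -/M; field; exact: hMN0.
  + move=> b' h; rewrite !Fminus_sym.
    apply: (proj2 (@br R nm1 n1 _ _ hn pb pa) _ b' h); rewrite -/N; field; exact: hMN0.
Qed.
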